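(* Let $N>1$ be an integer, $0<\epsilon<e$, $\tfrac12<\beta<1$, and $K=\lceil \log_{1/\beta}(N)\rceil\cdot\lceil \log(e/\epsilon)/\log(\beta/(1-\beta))\rceil$. Let $H$ be the $(N+1)\times(N+1)$ matrix with $H_{jk}=\Lambda\!\left(\tfrac{j+k}{2}\right)$, $0\le j,k\le N$, where $\Lambda(z)=\Gamma(z+1/2)/\Gamma(z+1)$. Then there is an $(N+1)\times(N+1)$ real matrix $\tilde H$ of rank at most $K+1$ such that $\max_{0\le j,k\le N}|H_{jk}-\tilde H_{jk}|\le\epsilon$.
   Context: $\Gamma$ denotes the gamma function; $e$ is Euler's number; $\log$ is the natural logarithm. *)

(* Defs.v *)
From Stdlib Require Import Reals Lra Lia ZArith.
Open Scope R_scope.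

(* g is the value of Euler's integral  Gamma(x) = int_0^oo t^(x-1) e^(-t) dt,
   understood as the (improper) limit of Riemann integrals over [a,b],
   a -> 0+, b -> +oo. *)
Definition is_Gamma (x g : R) : Prop :=
  forall eps, 0 < eps ->
  exists A B, 0 < A /\
    forall a b, 0 < a -> a <= A -> B <= b ->
      exists pr : Riemann_integrable (fun t => Rpower t (x - 1) * exp (- t)) a b,
        Rabs (RiemannInt pr - g) < eps.

Fixpoint rsum (r : nat) (f : nat -> R) : R :=
  match r with O => 0 | S r' => rsum r' f + f r' end.

(* Rank of an n x n real matrix (entries M j k, 0 <= j,k < n) is at most r:
   M is a sum of r rank-one matrices u_l v_l^T (rank factorization). *)
Definition rank_at_most (n : nat) (M : nat -> nat -> R) (r : nat) : Prop :=
  exists (u v : nat -> nat -> R),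
    forall j k, (j < n)%nat -> (k < n)%nat ->
      M j k = rsum r (fun l => u l j * v l k).

(* Main.v *)
Require Import Defs.
From Stdlib Require Import Reals Lra Lia ZArith.
From Coquelicot Require Import Coquelicot.
Open Scope R_scope.

Definition gi (x t : R) := Rpower t (x - 1) * exp (- t).

Lemma dexpm t : derivable_pt_lim (fun t => exp (- t)) t (- exp (- t)).
Proof.
  replace (- exp (-t)) with (exp (-t) * (-1)) by ring.
  apply (derivable_pt_lim_comp (fun t => - t) exp).
  - replace (-1) with (-(1)) by ring. apply derivable_pt_lim_opp, derivable_pt_lim_id.
  - apply derivable_pt_lim_exp.
Qed.

Lemma gi_derive x t : 0 < t ->
  derivable_pt_lim (gi x) t ((x-1) * Rpower t (x-1-1) * exp (-t) + Rpower t (x-1) * (- exp (-t))).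
Proof.
  intros Ht. unfold gi.
  apply (derivable_pt_lim_mult (fun t => Rpower t (x-1)) (fun t => exp (-t))).
  - apply derivable_pt_lim_power; auto.
  - apply dexpm.
Qed.

Lemma gi_cont x t : 0 < t -> continuous (gi x) t.
Proof.
  intros Ht. apply continuity_pt_filterlim.
  apply derivable_continuous_pt. eexists. apply gi_derive; auto.
Qed.

Lemma ex_RInt_gi x a b : 0 < a -> a <= b -> ex_RInt (gi x) a b.
Proof.
  intros Ha Hab; apply (ex_RInt_continuous (V:=R_CompleteNormedModule)); intros z Hz.
  rewrite Rmin_left in Hz by lra. apply gi_cont; lra.
Qed.

Lemma approx (Gamma : R -> R) (HGamma : forall x, 0 < x -> is_Gamma x (Gamma x)) x eps :
  0 < x -> 0 < eps -> exists A B, 0 < A /\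
    forall a b, 0 < a -> a <= A -> B <= b -> Rabs (RInt (gi x) a b - Gamma x) < eps.
Proof.
  intros hx he. destruct (HGamma x hx eps he) as [A [B [HA H]]].
  exists A, B; split; auto. intros a b h1 h2 h3.
  destruct (H a b h1 h2 h3) as [pr Hpr]. unfold gi. rewrite (RInt_Reals _ _ _ pr). exact Hpr.
Qed.

Lemma approx3 (Gamma : R -> R) (HGamma : forall x, 0 < x -> is_Gamma x (Gamma x)) x1 x2 x3 eps A0 B0 :
  0 < x1 -> 0 < x2 -> 0 < x3 -> 0 < eps -> 0 < A0 ->
  exists a b, 0 < a /\ a <= A0 /\ B0 <= b /\ a < b /\
   Rabs (RInt (gi x1) a b - Gamma x1) < eps /\
   Rabs (RInt (gi x2) a b - Gamma x2) < eps /\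
   Rabs (RInt (gi x3) a b - Gamma x3) < eps.
Proof.
  intros h1 h2 h3 he hA.
  destruct (approx Gamma HGamma x1 eps h1 he) as [A1 [B1 [HA1 H1]]].
  destruct (approx Gamma HGamma x2 eps h2 he) as [A2 [B2 [HA2 H2]]].
  destruct (approx Gamma HGamma x3 eps h3 he) as [A3 [B3 [HA3 H3]]].
  set (a := Rmin A0 (Rmin A1 (Rmin A2 A3))).
  assert (Ha : 0 < a) by (unfold a; repeat apply Rmin_glb_lt; auto).
  set (b := Rmax (a+1) (Rmax B0 (Rmax B1 (Rmax B2 B3)))).
  assert (a <= A0) by (unfold a; apply Rmin_l).
  assert (a <= A1) by (unfold a; eapply Rle_trans; [apply Rmin_r| apply Rmin_l]).
  assert (a <= A2) by (unfold a; eapply Rle_trans; [apply Rmin_r|]; eapply Rle_trans; [apply Rmin_r| apply Rmin_l]).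
  assert (a <= A3) by (unfold a; eapply Rle_trans; [apply Rmin_r|]; eapply Rle_trans; [apply Rmin_r| apply Rmin_r]).
  assert (a + 1 <= b) by (unfold b; apply Rmax_l).
  assert (B0 <= b) by (unfold b; eapply Rle_trans; [|apply Rmax_r]; apply Rmax_l).
  assert (B1 <= b) by (unfold b; eapply Rle_trans; [|apply Rmax_r]; eapply Rle_trans; [|apply Rmax_r]; apply Rmax_l).
  assert (B2 <= b) by (unfold b; eapply Rle_trans; [|apply Rmax_r]; eapply Rle_trans; [|apply Rmax_r]; eapply Rle_trans; [|apply Rmax_r]; apply Rmax_l).
  assert (B3 <= b) by (unfold b; eapply Rle_trans; [|apply Rmax_r]; eapply Rle_trans; [|apply Rmax_r]; eapply Rle_trans; [|apply Rmax_r]; apply Rmax_r).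
  exists a, b. repeat split; auto; try lra.
Qed.

Lemma small_a x eps : 0 < x -> 0 < eps -> exists A0, 0 < A0 /\ forall a, 0 < a -> a <= A0 -> Rpower a x < eps.
Proof.
  intros hx he. exists (exp ((ln eps - 1) / x)). split; [apply exp_pos|].
  intros a ha hle.
  apply Rle_lt_trans with (Rpower (exp ((ln eps - 1) / x)) x).
  - apply Rle_Rpower_l; [lra|split; lra].
  - unfold Rpower. rewrite ln_exp. replace (x * ((ln eps - 1)/x)) with (ln eps - 1) by (field; lra).
    rewrite <- (exp_ln eps) at 2 by auto. apply exp_increasing; lra.
Qed.

Lemma exp_ge_pow y n : 0 <= y -> y ^ n / INR (fact n) <= exp y.
Proof.
  intros hy. eapply Rle_trans; [|apply (exp_ge_taylor y n hy)].
  destruct n. { simpl. lra. }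
  change (sum_f_R0 (fun k => y ^ k / INR (fact k)) (S n)) with (sum_f_R0 (fun k => y ^ k / INR (fact k)) n + y ^ (S n) / INR (fact (S n))).
  assert (0 <= sum_f_R0 (fun k => y ^ k / INR (fact k)) n).
  { apply cond_pos_sum. intros k. apply Rmult_le_pos. apply pow_le; auto.
    apply Rlt_le, Rinv_0_lt_compat, lt_0_INR, lt_O_fact. }
  lra.
Qed.

Lemma nat_above x : exists m : nat, x <= INR m.
Proof.
  destruct (archimed x) as [H1 _].
  exists (Z.to_nat (up x)). destruct (Z_le_gt_dec 0 (up x)) as [h|h].
  - rewrite INR_IZR_INZ, Z2Nat.id by auto. lra.
  - replace (Z.to_nat (up x)) with 0%nat by lia. simpl. assert (h2 : (up x < 0)%Z) by lia. apply IZR_lt in h2. lra.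
Qed.

Lemma large_b x eps : 0 < eps -> exists B0, 1 <= B0 /\ forall b, B0 <= b -> Rpower b x * exp (- b) < eps.
Proof.
  intros he. destruct (nat_above x) as [m hm].
  set (F := INR (fact (S m))).
  assert (hF : 0 < F) by (apply lt_0_INR, lt_O_fact).
  exists (Rmax 1 (2 * F / eps)). split; [apply Rmax_l|].
  intros b hb.
  assert (hb1 : 1 <= b) by (eapply Rle_trans; [apply Rmax_l|exact hb]).
  assert (hb2 : 2 * F / eps <= b) by (eapply Rle_trans; [apply Rmax_r|exact hb]).
  assert (Hp : Rpower b x <= b ^ m).
  { rewrite <- Rpower_pow by lra. apply Rle_Rpower; auto. }
  assert (He : b ^ (S m) / F <= exp b) by (apply exp_ge_pow; lra).
  rewrite exp_Ropp.
  assert (0 < exp b) by apply exp_pos.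
  assert (0 < b ^ m) by (apply pow_lt; lra).
  apply Rle_lt_trans with (b ^ m / exp b).
  { unfold Rdiv. apply Rmult_le_compat_r; [apply Rlt_le, Rinv_0_lt_compat; auto| auto]. }
  apply Rle_lt_trans with (b ^ m / (b ^ (S m) / F)).
  { apply Rmult_le_compat_l; [lra|]. apply Rinv_le_contravar; auto.
    apply Rdiv_lt_0_compat; auto. apply pow_lt; lra. }
  replace (b ^ m / (b ^ S m / F)) with (F / b) by (simpl; field; split; lra).
  assert (hb3 : 2 * F <= b * eps).
  { apply Rmult_le_compat_r with (r := eps) in hb2; [|lra].
    replace (2 * F / eps * eps) with (2 * F) in hb2 by (field; lra). exact hb2. }
  apply (Rmult_lt_reg_r b); [lra|]. replace (F / b * b) with F by (field; lra). lra.
Qed.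

Lemma ibp x a b : 0 < x -> 0 < a -> a <= b ->
  RInt (gi (x+1)) a b = x * RInt (gi x) a b + Rpower a x * exp (-a) - Rpower b x * exp (-b).
Proof.
  intros hx ha hab.
  set (F := fun t => - (Rpower t x * exp (-t))).
  set (h := fun t => gi (x+1) t - x * gi x t).
  assert (HI : is_RInt h a b (F b - F a)).
  { apply (is_RInt_derive (V:=R_CompleteNormedModule) F h).
    - intros t ht. rewrite Rmin_left in ht by lra. apply is_derive_Reals.
      unfold F, h, gi. replace (x + 1 - 1) with x by ring.
      replace (Rpower t x * exp (- t) - x * (Rpower t (x - 1) * exp (- t)))
        with (- (x * Rpower t (x-1) * exp (-t) + Rpower t x * (- exp (-t)))) by ring.
      apply derivable_pt_lim_opp.
      apply (derivable_pt_lim_mult (fun t => Rpower t x) (fun t => exp (-t))).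
      + apply derivable_pt_lim_power; lra.
      + apply dexpm.
    - intros t ht. rewrite Rmin_left in ht by lra. unfold h.
      apply (continuous_minus (V:=R_NormedModule)). apply gi_cont; lra.
      apply (continuous_scal_r (V:=R_NormedModule) x (gi x)). apply gi_cont; lra. }
  apply (is_RInt_unique (V:=R_CompleteNormedModule)) in HI.
  unfold h in HI.
  rewrite (RInt_minus (V:=R_CompleteNormedModule) (gi (x+1)) (fun t => x * gi x t)) in HI.
  2: apply ex_RInt_gi; auto.
  2: apply (ex_RInt_scal (V:=R_NormedModule) (gi x)); apply ex_RInt_gi; auto.
  rewrite (RInt_scal (V:=R_CompleteNormedModule) (gi x)) in HI by (apply ex_RInt_gi; auto).
  unfold minus, plus, opp, scal in HI; simpl in HI. unfold mult in HI; simpl in HI.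
  unfold F in HI. lra.
Qed.

Lemma exp_mono x y : x <= y -> exp x <= exp y.
Proof. intros h. destruct (Rle_lt_or_eq_dec x y h) as [h1|h1]. apply Rlt_le, exp_increasing; auto. subst; lra. Qed.

Lemma zero_eps u c : 0 < c -> (forall eps, 0 < eps -> Rabs u <= c * eps) -> u = 0.
Proof.
  intros hc H. destruct (Req_dec u 0) as [h|h]; auto.
  assert (hu : 0 < Rabs u) by (apply Rabs_pos_lt; auto).
  specialize (H (Rabs u / (2 * c))).
  assert (c * (Rabs u / (2 * c)) = Rabs u / 2) by (field; lra).
  assert (0 < Rabs u / (2 * c)) by (apply Rdiv_lt_0_compat; lra).
  specialize (H ltac:(lra)). lra.
Qed.

Lemma le_eps u v c : 0 < c -> (forall eps, 0 < eps -> u <= v + c * eps) -> u <= v.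
Proof.
  intros hc H. destruct (Rle_dec u v) as [h|h]; auto.
  specialize (H ((u - v) / (2 * c))).
  assert (c * ((u - v) / (2 * c)) = (u - v) / 2) by (field; lra).
  assert (0 < (u - v) / (2 * c)) by (apply Rdiv_lt_0_compat; lra).
  specialize (H ltac:(lra)). lra.
Qed.

Lemma gi_pos x t : 0 < t -> 0 < gi x t.
Proof. intros; unfold gi, Rpower. apply Rmult_lt_0_compat; apply exp_pos. Qed.

Section GammaFacts.
Variable Gamma : R -> R.
Hypothesis HGamma : forall x, 0 < x -> is_Gamma x (Gamma x).

Lemma Grec x : 0 < x -> Gamma (x + 1) = x * Gamma x.
Proof.
  intros hx.
  cut (Gamma (x+1) - x * Gamma x = 0). { lra. }
  apply (zero_eps _ (4 + x)); [lra|]. intros eps he.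
  destruct (small_a x eps hx he) as [A0 [hA0 HA0]].
  destruct (large_b x eps he) as [B0 [hB0 HB0]].
  destruct (approx3 Gamma HGamma (x+1) x x eps A0 B0 ltac:(lra) hx hx he hA0)
    as [a [b [ha [haA [hbB [hab [H1 [H2 _]]]]]]]].
  pose proof (ibp x a b hx ha ltac:(lra)) as HI.
  pose proof (HA0 a ha haA) as Ea. pose proof (HB0 b hbB) as Eb.
  assert (0 < exp (-a) <= 1).
  { split. apply exp_pos. rewrite <- exp_0. apply Rlt_le, exp_increasing; lra. }
  assert (0 < Rpower a x) by (unfold Rpower; apply exp_pos).
  assert (0 < Rpower b x * exp (-b)) by (apply Rmult_lt_0_compat; [unfold Rpower|]; apply exp_pos).
  assert (Rpower a x * exp (-a) <= Rpower a x) by (rewrite <- (Rmult_1_r (Rpower a x)) at 2; apply Rmult_le_compat_l; lra).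
  rewrite HI in H1.
  apply Rabs_def2 in H1. apply Rabs_def2 in H2. apply Rabs_le.
  split; nra.
Qed.

Lemma G1 : Gamma 1 = 1.
Proof.
  cut (Gamma 1 - 1 = 0). { lra. }
  apply (zero_eps _ 4); [lra|]. intros eps he.
  destruct (large_b 1 eps he) as [B0 [hB0 HB0]].
  destruct (approx3 Gamma HGamma 1 1 1 eps eps B0 ltac:(lra) ltac:(lra) ltac:(lra) he he)
    as [a [b [ha [haA [hbB [hab [H1 _]]]]]]].
  assert (HI : RInt (gi 1) a b = exp (-a) - exp (-b)).
  { assert (HI : is_RInt (fun t => exp (-t)) a b ((- exp (-b)) - (- exp (-a)))).
    { apply (is_RInt_derive (V:=R_CompleteNormedModule) (fun t => - exp (-t))).
      - intros t ht. apply is_derive_Reals.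
        replace (exp (-t)) with (- (- exp (-t))) by ring.
        apply derivable_pt_lim_opp, dexpm.
      - intros t ht. apply (continuous_comp (fun t => - t) exp).
        apply (continuous_opp (V:=R_NormedModule)), continuous_id. apply continuous_exp. }
    apply (is_RInt_unique (V:=R_CompleteNormedModule)) in HI.
    transitivity (RInt (fun t => exp (-t)) a b).
    { apply RInt_ext. intros t ht. rewrite Rmin_left in ht by lra.
      unfold gi. replace (1 - 1) with 0 by ring. rewrite Rpower_O by lra. now rewrite Rmult_1_l. }
    rewrite HI. unfold minus, plus, opp; simpl. ring. }
  rewrite HI in H1.
  pose proof (HB0 b hbB) as Eb. rewrite Rpower_1 in Eb by lra.
  assert (0 < exp (-b)) by apply exp_pos.
  assert (exp (-b) <= b * exp (-b)) by (rewrite <- (Rmult_1_l (exp (-b))) at 1; apply Rmult_le_compat_r; lra).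
  assert (1 + - a <= exp (-a)) by apply exp_ineq1_le.
  assert (exp (-a) <= 1) by (rewrite <- exp_0; apply Rlt_le, exp_increasing; lra).
  apply Rabs_def2 in H1. apply Rabs_le. split; nra.
Qed.


Lemma RInt_ge_const (f : R -> R) a b c : a <= b -> ex_RInt f a b ->
  (forall t, a < t < b -> c <= f t) -> c * (b - a) <= RInt f a b.
Proof.
  intros hab hf H.
  assert (E : RInt (fun _ => c) a b = c * (b - a)).
  { rewrite (RInt_const (V:=R_CompleteNormedModule)). unfold scal; simpl; unfold mult; simpl. ring. }
  rewrite <- E. apply RInt_le; auto. apply (ex_RInt_const (V:=R_NormedModule)).
Qed.

Lemma RInt_gi_nonneg x a b : 0 < a -> a <= b -> 0 <= RInt (gi x) a b.
Proof.
  intros ha hab. replace 0 with (0 * (b - a)) by ring.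
  apply RInt_ge_const; auto. apply ex_RInt_gi; auto.
  intros t ht. apply Rlt_le, gi_pos; lra.
Qed.

Lemma Gpos x : 0 < x -> 0 < Gamma x.
Proof.
  intros hx.
  set (c := exp (- (Rabs (x - 1) * ln 2) - 2)).
  assert (hc : 0 < c) by apply exp_pos.
  assert (H12 : c <= RInt (gi x) 1 2).
  { replace c with (c * (2 - 1)) by ring. apply RInt_ge_const; [lra| apply ex_RInt_gi; lra|].
    intros t ht. unfold gi, Rpower, c. rewrite <- exp_plus. apply exp_mono.
    assert (0 <= ln t) by (rewrite <- ln_1; apply ln_le; lra).
    assert (ln t <= ln 2) by (apply ln_le; lra).
    destruct (Rle_dec 0 (x - 1)) as [h|h].
    - rewrite Rabs_right by lra. nra.
    - rewrite Rabs_left by lra. nra. }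
  destruct (approx3 Gamma HGamma x x x (c/2) 1 2 hx hx hx ltac:(lra) ltac:(lra))
    as [a [b [ha [haA [hbB [hab [H1 _]]]]]]].
  assert (E : RInt (gi x) a b = RInt (gi x) a 1 + RInt (gi x) 1 2 + RInt (gi x) 2 b).
  { rewrite <- (RInt_Chasles (V:=R_CompleteNormedModule) (gi x) a 1 b).
    rewrite <- (RInt_Chasles (V:=R_CompleteNormedModule) (gi x) 1 2 b).
    unfold plus; simpl. ring.
    all: apply ex_RInt_gi; lra. }
  pose proof (RInt_gi_nonneg x a 1 ha haA). pose proof (RInt_gi_nonneg x 2 b ltac:(lra) hbB).
  apply Rabs_def2 in H1. lra.
Qed.

Lemma Gconv x : 1 <= x -> Gamma x ^ 2 <= Gamma (x - /2) * Gamma (x + /2).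
Proof.
  intros hx.
  assert (Hl : forall lam, 2 * lam * Gamma x <= lam ^ 2 * Gamma (x - /2) + Gamma (x + /2)).
  { intros lam.
    apply (le_eps _ _ (2 * Rabs lam + lam ^ 2 + 1)). { pose proof (Rabs_pos lam). nra. }
    intros eps he.
    destruct (approx3 Gamma HGamma x (x - /2) (x + /2) eps 1 0 ltac:(lra) ltac:(lra) ltac:(lra) he ltac:(lra))
      as [a [b [ha [haA [hbB [hab [H1 [H2 H3]]]]]]]].
    assert (HP : 2 * lam * RInt (gi x) a b <= lam ^ 2 * RInt (gi (x - /2)) a b + RInt (gi (x + /2)) a b).
    { assert (E1 : RInt (fun t => 2 * lam * gi x t) a b = 2 * lam * RInt (gi x) a b).
      { apply (RInt_scal (V:=R_CompleteNormedModule) (gi x)). apply ex_RInt_gi; lra. }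
      assert (E2 : RInt (fun t => lam ^ 2 * gi (x - /2) t + gi (x + /2) t) a b
                   = lam ^ 2 * RInt (gi (x - /2)) a b + RInt (gi (x + /2)) a b).
      { rewrite (RInt_plus (V:=R_CompleteNormedModule) (fun t => lam ^ 2 * gi (x - /2) t) (gi (x + /2))).
        rewrite (RInt_scal (V:=R_CompleteNormedModule) (gi (x - /2))). reflexivity.
        apply ex_RInt_gi; lra.
        apply (ex_RInt_scal (V:=R_NormedModule) (gi (x - /2))). apply ex_RInt_gi; lra.
        apply ex_RInt_gi; lra. }
      rewrite <- E1, <- E2. apply RInt_le. lra.
      apply (ex_RInt_scal (V:=R_NormedModule) (gi x)). apply ex_RInt_gi; lra.
      apply (ex_RInt_plus (V:=R_NormedModule) (fun t => lam ^ 2 * gi (x - /2) t) (gi (x + /2))).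
      apply (ex_RInt_scal (V:=R_NormedModule) (gi (x - /2))). apply ex_RInt_gi; lra.
      apply ex_RInt_gi; lra.
      intros t ht. unfold gi.
      set (P := Rpower t (x - / 2 - 1)). set (s := Rpower t (/2)).
      assert (e1 : Rpower t (x - 1) = P * s) by (unfold P, s; rewrite <- Rpower_plus; f_equal; field).
      assert (e2 : Rpower t (x + /2 - 1) = P * s * s) by (unfold P, s; rewrite <- !Rpower_plus; f_equal; field).
      rewrite e1, e2.
      assert (0 < P) by (unfold P, Rpower; apply exp_pos).
      assert (0 < exp (-t)) by apply exp_pos.
      assert (0 <= (lam - s) ^ 2) by apply pow2_ge_0.
      assert (0 <= P * exp (-t) * (lam - s) ^ 2) by (apply Rmult_le_pos; [apply Rmult_le_pos|]; lra).
      nra. }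
    apply Rabs_def2 in H1. apply Rabs_def2 in H2. apply Rabs_def2 in H3.
    pose proof (Rabs_pos lam).
    assert (lam * Gamma x - lam * RInt (gi x) a b <= Rabs lam * eps).
    { rewrite <- Rmult_minus_distr_l. eapply Rle_trans; [apply Rle_abs|].
      rewrite Rabs_mult. apply Rmult_le_compat_l; auto. apply Rabs_le; lra. }
    assert (0 <= lam ^ 2) by apply pow2_ge_0.
    assert (lam ^ 2 * (RInt (gi (x - /2)) a b - Gamma (x - /2)) <= lam ^ 2 * eps)
      by (apply Rmult_le_compat_l; lra).
    lra. }
  assert (hg : 0 < Gamma (x - /2)) by (apply Gpos; lra).
  specialize (Hl (Gamma x / Gamma (x - /2))).
  apply (Rmult_le_compat_r (Gamma (x - /2))) in Hl; [|lra].
  replace (2 * (Gamma x / Gamma (x - / 2)) * Gamma x * Gamma (x - / 2)) with (2 * Gamma x ^ 2) in Hl by (field; lra).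
  replace (((Gamma x / Gamma (x - / 2)) ^ 2 * Gamma (x - / 2) + Gamma (x + / 2)) * Gamma (x - / 2))
    with (Gamma x ^ 2 + Gamma (x + / 2) * Gamma (x - / 2)) in Hl by (field; lra).
  lra.
Qed.
End GammaFacts.

Lemma cont_pow (g : R -> R) m x : continuous g x -> continuous (fun y => g y ^ m) x.
Proof.
  intros hg. induction m.
  - simpl. apply continuous_const.
  - simpl. apply (continuous_mult (K:=R_AbsRing) g (fun y => g y ^ m)); auto.
Qed.

Lemma cont_sinpow m x : continuous (fun t => sin t ^ m) x.
Proof. apply (cont_pow sin). apply continuous_sin. Qed.

Definition W (m : nat) := RInt (fun t => sin t ^ m) 0 (PI / 2).

Lemma ex_RInt_sinpow m a b : ex_RInt (fun t => sin t ^ m) a b.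
Proof. apply (ex_RInt_continuous (V:=R_CompleteNormedModule)); intros; apply cont_sinpow. Qed.

Lemma W0 : W 0 = PI / 2.
Proof.
  unfold W. simpl. rewrite (RInt_const (V:=R_CompleteNormedModule)).
  unfold scal; simpl; unfold mult; simpl. ring.
Qed.

Lemma W1 : W 1 = 1.
Proof.
  unfold W.
  assert (HI : is_RInt (fun t => sin t ^ 1) 0 (PI/2) ((- cos (PI/2)) - (- cos 0))).
  { apply (is_RInt_derive (V:=R_CompleteNormedModule) (fun t => - cos t)).
    - intros t ht. apply is_derive_Reals. replace (sin t ^ 1) with (- - sin t) by ring.
      apply derivable_pt_lim_opp, derivable_pt_lim_cos.
    - intros; apply cont_sinpow. }
  apply (is_RInt_unique (V:=R_CompleteNormedModule)) in HI. rewrite HI.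
  rewrite cos_PI2, cos_0. unfold minus, plus, opp; simpl. ring.
Qed.

Lemma Wrec m : W (S (S m)) = (INR m + 1) / (INR m + 2) * W m.
Proof.
  assert (HI : is_RInt (fun t => (INR m + 1) * sin t ^ m - (INR m + 2) * sin t ^ (S (S m))) 0 (PI/2)
                  (cos (PI/2) * sin (PI/2) ^ (S m) - cos 0 * sin 0 ^ (S m))).
  { apply (is_RInt_derive (V:=R_CompleteNormedModule) (fun t => cos t * sin t ^ (S m))).
    - intros t ht. apply is_derive_Reals.
      assert (D : derivable_pt_lim (fun t => cos t * sin t ^ (S m)) t
                   (- sin t * sin t ^ (S m) + cos t * (INR (S m) * sin t ^ m * cos t))).
      { apply (derivable_pt_lim_mult cos (fun t => sin t ^ (S m))).
        apply derivable_pt_lim_cos.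
        apply (derivable_pt_lim_comp sin (fun x => x ^ (S m))).
        apply derivable_pt_lim_sin.
        replace (INR (S m) * sin t ^ m) with (INR (S m) * sin t ^ (Nat.pred (S m))) by reflexivity.
        apply derivable_pt_lim_pow. }
      replace ((INR m + 1) * sin t ^ m - (INR m + 2) * sin t ^ S (S m)) with
        (- sin t * sin t ^ (S m) + cos t * (INR (S m) * sin t ^ m * cos t)); auto.
      rewrite S_INR. pose proof (sin2_cos2 t) as hc. unfold Rsqr in hc.
      change (sin t ^ S (S m)) with (sin t * (sin t * sin t ^ m)).
      change (sin t ^ S m) with (sin t * sin t ^ m).
      replace (cos t * (INR m + 1) * sin t ^ m * cos t) with ((INR m + 1) * sin t ^ m * (cos t * cos t)) by ring.
      replace (cos t * ((INR m + 1) * sin t ^ m * cos t)) with ((INR m + 1) * sin t ^ m * (cos t * cos t)) by ring.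
      replace (cos t * cos t) with (1 - sin t * sin t) by lra. ring.
    - intros t ht.
      apply (continuous_minus (V:=R_NormedModule)).
      apply (continuous_scal_r (V:=R_NormedModule) _ (fun t => sin t ^ m)); apply cont_sinpow.
      apply (continuous_scal_r (V:=R_NormedModule) _ (fun t => sin t ^ (S (S m)))); apply cont_sinpow. }
  apply (is_RInt_unique (V:=R_CompleteNormedModule)) in HI.
  rewrite cos_PI2, sin_0 in HI.
  replace (0 * sin (PI / 2) ^ S m - cos 0 * 0 ^ S m) with 0 in HI by (simpl; ring).
  rewrite (RInt_minus (V:=R_CompleteNormedModule) (fun t => (INR m + 1) * sin t ^ m)
             (fun t => (INR m + 2) * sin t ^ (S (S m)))) in HI.
  2,3: apply (ex_RInt_scal (V:=R_NormedModule)); apply ex_RInt_sinpow.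
  rewrite (RInt_scal (V:=R_CompleteNormedModule) (fun t => sin t ^ m)) in HI by apply ex_RInt_sinpow.
  rewrite (RInt_scal (V:=R_CompleteNormedModule) (fun t => sin t ^ (S (S m)))) in HI by apply ex_RInt_sinpow.
  unfold minus, plus, opp, scal in HI; simpl in HI; unfold mult in HI; simpl in HI.
  unfold W. assert (0 < INR m + 2) by (pose proof (pos_INR m); lra).
  set (A := RInt (fun t => sin t ^ m) 0 (PI/2)) in *.
  set (B := RInt (fun t => sin t ^ S (S m)) 0 (PI/2)) in *.
  change (RInt (fun t : R => sin t * (sin t * sin t ^ m)) 0 (PI / 2)) with B in HI.
  apply (Rmult_eq_reg_l (INR m + 2)); [|lra].
  field_simplify; [|lra]. lra.
Qed.

Lemma W_decr m : W (S m) <= W m.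
Proof.
  unfold W. apply RInt_le. pose proof PI_RGT_0; lra. apply ex_RInt_sinpow. apply ex_RInt_sinpow.
  intros t ht. assert (0 <= sin t) by (apply sin_ge_0; pose proof PI_RGT_0; lra).
  assert (sin t <= 1) by (pose proof (SIN_bound t); lra).
  simpl. assert (0 <= sin t ^ m) by (apply pow_le; auto).
  nra.
Qed.

Lemma W_pos m : 0 < W m.
Proof.
  cut (0 < W m /\ 0 < W (S m)). { tauto. }
  induction m.
  - rewrite W0, W1. pose proof PI_RGT_0. lra.
  - destruct IHm. split; auto. rewrite Wrec.
    pose proof (pos_INR m). apply Rmult_lt_0_compat; auto. apply Rdiv_lt_0_compat; lra.
Qed.

Section F.
Variable Gamma : R -> R.
Hypothesis HGamma : forall x, 0 < x -> is_Gamma x (Gamma x).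

Definition Lam z := Gamma (z + / 2) / Gamma (z + 1).
Definition fv (m : nat) := Lam (INR m / 2).

Let Gp x (h : 0 < x) := Gpos Gamma HGamma x h.
Let Gr x (h : 0 < x) := Grec Gamma HGamma x h.

Lemma fv0 : fv 0 = Gamma (/2).
Proof.
  unfold fv, Lam. simpl INR. replace (0/2 + /2) with (/2) by field. replace (0/2+1) with 1 by field.
  rewrite (G1 Gamma HGamma). field.
Qed.

Lemma fv1 : fv 1 = 2 / Gamma (/2).
Proof.
  unfold fv, Lam. simpl INR. replace (1/2 + /2) with 1 by field. replace (1/2+1) with (/2 + 1) by field.
  rewrite (G1 Gamma HGamma), Gr by lra. assert (0 < Gamma (/2)) by (apply Gp; lra). field. lra.
Qed.

Lemma fvrec m : fv (S (S m)) = fv m * ((INR m + 1) / (INR m + 2)).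
Proof.
  unfold fv, Lam. set (z := INR m / 2).
  assert (hz : 0 <= z) by (unfold z; pose proof (pos_INR m); lra).
  replace (INR (S (S m)) / 2) with (z + 1) by (unfold z; rewrite !S_INR; field).
  replace (z + 1 + /2) with ((z + /2) + 1) by ring. replace (z + 1 + 1) with ((z+1)+1) by ring.
  rewrite Gr, Gr by lra.
  assert (0 < Gamma (z + /2)) by (apply Gp; lra). assert (0 < Gamma (z + 1)) by (apply Gp; lra).
  replace (INR m) with (2 * z) by (unfold z; field). field. repeat split; lra.
Qed.

Lemma fvpos m : 0 < fv m.
Proof.
  unfold fv, Lam. pose proof (pos_INR m). apply Rdiv_lt_0_compat; apply Gp; lra.
Qed.

Lemma fvmono m : fv (S m) <= fv m.
Proof.
  unfold fv, Lam. set (z := INR m / 2).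
  assert (hz : 0 <= z) by (unfold z; pose proof (pos_INR m); lra).
  replace (INR (S m) / 2) with (z + /2) by (unfold z; rewrite !S_INR; field).
  replace (z + /2 + /2) with (z + 1) by field.
  pose proof (Gconv Gamma HGamma (z + 1) ltac:(lra)) as HC.
  replace (z + 1 - /2) with (z + /2) in HC by field.
  replace (z + 1 + /2) with (z + /2 + 1) in HC by field.
  assert (0 < Gamma (z + /2)) by (apply Gp; lra). assert (0 < Gamma (z + 1)) by (apply Gp; lra).
  assert (0 < Gamma (z + /2 + 1)) by (apply Gp; lra).
  apply (Rmult_le_reg_r (Gamma (z + /2 + 1) * Gamma (z + 1))). nra.
  replace (Gamma (z + 1) / Gamma (z + / 2 + 1) * (Gamma (z + / 2 + 1) * Gamma (z + 1))) with (Gamma (z+1) ^ 2) by (field; lra).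
  replace (Gamma (z + / 2) / Gamma (z + 1) * (Gamma (z + / 2 + 1) * Gamma (z + 1))) with (Gamma (z + /2) * Gamma (z + /2 + 1)) by (field; lra).
  exact HC.
Qed.

Definition c0 := Gamma (/2).

Lemma fvW n : fv (2 * n) = c0 * (2 / PI) * W (2 * n) /\ fv (S (2 * n)) = 2 / c0 * W (S (2 * n)).
Proof.
  assert (hc : 0 < c0) by (apply Gp; lra). pose proof PI_RGT_0.
  induction n.
  - change (2*0)%nat with 0%nat. change (S 0) with 1%nat. rewrite fv0, fv1, W0, W1. fold c0. split; field; lra.
  - destruct IHn as [IH1 IH2].
    replace (2 * S n)%nat with (S (S (2 * n))) by lia.
    rewrite fvrec, Wrec, fvrec, Wrec, IH1, IH2. split; ring.
Qed.

Lemma c0sq : c0 ^ 2 = PI.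
Proof.
  assert (hc : 0 < c0) by (apply Gp; lra). pose proof PI_RGT_0 as hpi.
  assert (Hlo : forall n, PI * ((INR (2 * n) + 1) / (INR (2 * n) + 2)) <= c0 ^ 2).
  { intros n. destruct (fvW n) as [A1 A2]. pose proof (fvmono (2 * n)) as M. rewrite A1, A2 in M.
    pose proof (W_decr (S (2 * n))) as D1. rewrite Wrec in D1.
    pose proof (W_pos (2 * n)).
    assert (e: INR (2*n) + 1 > 0) by (pose proof (pos_INR (2*n)); lra).
    assert (PI * W (S (2 * n)) <= c0 ^ 2 * W (2 * n)).
    { apply (Rmult_le_compat_l (c0 * PI / 2)) in M; [|nra].
      replace (c0 * PI / 2 * (2 / c0 * W (S (2 * n)))) with (PI * W (S (2 * n))) in M by (field; lra).
      replace (c0 * PI / 2 * (c0 * (2 / PI) * W (2 * n))) with (c0 ^ 2 * W (2 * n)) in M by (field; lra).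
      exact M. }
    apply (Rmult_le_reg_r (W (2 * n))); auto.
    assert (0 < (INR (2 * n) + 1) / (INR (2 * n) + 2)) by (apply Rdiv_lt_0_compat; lra).
    nra. }
  assert (Hhi : forall n, c0 ^ 2 * ((INR (2 * n) + 1) / (INR (2 * n) + 2)) <= PI).
  { intros n. destruct (fvW n) as [A1 A2]. pose proof (fvmono (S (2 * n))) as M.
    replace (S (S (2 * n))) with (2 * S n)%nat in M by lia.
    destruct (fvW (S n)) as [B1 _]. rewrite B1, A2 in M.
    replace (2 * S n)%nat with (S (S (2 * n))) in M by lia. rewrite Wrec in M.
    pose proof (W_decr (2 * n)) as D1.
    pose proof (W_pos (2 * n)).
    assert (e: INR (2*n) + 1 > 0) by (pose proof (pos_INR (2*n)); lra).
    set (r := (INR (2 * n) + 1) / (INR (2 * n) + 2)) in *.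
    assert (0 < r) by (apply Rdiv_lt_0_compat; lra).
    assert (c0 ^ 2 * (r * W (2 * n)) <= PI * W (S (2 * n))).
    { apply (Rmult_le_compat_l (c0 * PI / 2)) in M; [|nra].
      replace (c0 * PI / 2 * (2 / c0 * W (S (2 * n)))) with (PI * W (S (2 * n))) in M by (field; lra).
      replace (c0 * PI / 2 * (c0 * (2 / PI) * (r * W (2 * n)))) with (c0 ^ 2 * (r * W (2 * n))) in M by (field; lra).
      exact M. }
    apply (Rmult_le_reg_r (W (2 * n))); auto. nra. }
  assert (key : forall n : nat, Rabs (c0 ^ 2 - PI) <= (PI + c0 ^ 2) / (INR n + 1)).
  { intros n. pose proof (Hlo n) as L. pose proof (Hhi n) as U.
    assert (hn : INR n + 1 <= INR (2 * n) + 1) by (rewrite mult_INR; simpl; pose proof (pos_INR n); lra).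
    set (k := INR (2 * n)) in *. assert (0 <= k) by (unfold k; apply pos_INR).
    replace ((k + 1) / (k + 2)) with (1 - 1 / (k + 2)) in L, U by (field; lra).
    assert (0 < INR n + 1) by (pose proof (pos_INR n); lra).
    assert (1 / (k + 2) <= 1 / (INR n + 1)) by (apply Rmult_le_compat_l; [lra|]; apply Rinv_le_contravar; lra).
    assert (0 < c0 ^ 2) by (apply pow_lt; auto).
    assert (0 < 1 / (k+2)) by (apply Rdiv_lt_0_compat; lra).
    apply Rabs_le. unfold Rdiv. split; nra. }
  apply Rminus_diag_uniq.
  apply (zero_eps _ (PI + c0 ^ 2)); [pose proof (pow_lt c0 2 hc); lra|].
  intros eps he. destruct (nat_above (/ eps)) as [n hn].
  eapply Rle_trans; [apply (key n)|].
  unfold Rdiv. apply Rmult_le_compat_l; [pose proof (pow_lt c0 2 hc); lra|].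
  rewrite <- (Rinv_inv eps). apply Rinv_le_contravar. apply Rinv_0_lt_compat; auto. lra.
Qed.

End F.

Fixpoint binR (n l : nat) : R :=
  match n, l with
  | _, O => 1
  | O, S _ => 0
  | S n', S l' => binR n' l' + binR n' (S l')
  end.

Lemma binR_big n l : (n < l)%nat -> binR n l = 0.
Proof.
  revert l; induction n; intros l h.
  - destruct l; [lia|reflexivity].
  - destruct l; [lia|]. simpl. rewrite !IHn by lia. ring.
Qed.

Lemma binR_0 n : binR n 0 = 1.
Proof. destruct n; reflexivity. Qed.

Definition Q (n d : nat) (s : R) := rsum d (fun l => binR n l * (1 - s) ^ l * s ^ (n - l)).

Lemma Q0 d s : Q 0 (S d) s = 1.
Proof.
  induction d.
  - unfold Q; simpl. ring.
  - unfold Q in *. change (rsum (S (S d)) (fun l => binR 0 l * (1 - s) ^ l * s ^ (0 - l)))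
      with (rsum (S d) (fun l => binR 0 l * (1 - s) ^ l * s ^ (0 - l)) + binR 0 (S d) * (1 - s) ^ (S d) * s ^ (0 - S d)).
    rewrite IHd. simpl. ring.
Qed.

Lemma Qrec n d s : Q (S n) (S d) s = (1 - s) * Q n d s + s * Q n (S d) s.
Proof.
  induction d.
  - unfold Q. cbn [rsum binR]. rewrite !Nat.sub_0_r. change (s ^ S n) with (s * s ^ n). rewrite binR_0. ring.
  - unfold Q in *.
    change (rsum (S (S d)) (fun l => binR (S n) l * (1 - s) ^ l * s ^ (S n - l)))
      with (rsum (S d) (fun l => binR (S n) l * (1 - s) ^ l * s ^ (S n - l)) + binR (S n) (S d) * (1 - s) ^ (S d) * s ^ (S n - S d)).
    rewrite IHd.
    change (rsum (S (S d)) (fun l => binR n l * (1 - s) ^ l * s ^ (n - l)))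
      with (rsum (S d) (fun l => binR n l * (1 - s) ^ l * s ^ (n - l)) + binR n (S d) * (1 - s) ^ (S d) * s ^ (n - S d)).
    change (rsum (S d) (fun l => binR n l * (1 - s) ^ l * s ^ (n - l)))
      with (rsum d (fun l => binR n l * (1 - s) ^ l * s ^ (n - l)) + binR n d * (1 - s) ^ d * s ^ (n - d)).
    change (binR (S n) (S d)) with (binR n d + binR n (S d)).
    change (S n - S d)%nat with (n - d)%nat.
    destruct (le_lt_dec (S d) n) as [h|h].
    + replace (n - d)%nat with (S (n - S d)) by lia. simpl. ring.
    + rewrite (binR_big n (S d)) by lia. simpl. ring.
Qed.

Lemma bern a k : 0 <= a -> a ^ (S k) + INR (S k) * a ^ k <= (a + 1) ^ (S k).
Proof.
  intros ha. induction k.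
  - simpl. lra.
  - change ((a + 1) ^ S (S k)) with ((a + 1) * (a + 1) ^ S k).
    assert (0 <= a ^ k) by (apply pow_le; auto).
    assert (0 <= a ^ S k) by (apply pow_le; auto).
    change (a ^ S (S k)) with (a * a ^ S k). change (a ^ S k) with (a * a ^ k) in *.
    rewrite !S_INR in *.
    assert (0 <= INR k) by apply pos_INR.
    assert ((a + 1) * (a * a ^ k + (INR k + 1) * a ^ k) <= (a + 1) * (a + 1) ^ S k)
      by (apply Rmult_le_compat_l; lra).
    nra.
Qed.

Lemma Qbound n d s : 0 <= s <= 1 ->
  0 <= 1 - Q n d s <= (INR n * (1 - s)) ^ d / INR (fact d).
Proof.
  intros hs. revert d. induction n; intros d.
  - destruct d.
    + unfold Q; simpl. lra.
    + rewrite Q0. simpl INR. rewrite Rmult_0_l, pow_i by lia. unfold Rdiv. rewrite Rmult_0_l. lra.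
  - destruct d.
    + unfold Q; simpl. lra.
    + rewrite Qrec.
      destruct (IHn d) as [A1 A2]. destruct (IHn (S d)) as [B1 B2].
      set (x := 1 - s) in *. set (a := INR n) in *.
      assert (ha : 0 <= a) by apply pos_INR.
      assert (hx : 0 <= x) by (unfold x; lra).
      replace (1 - (x * Q n d s + s * Q n (S d) s)) with (x * (1 - Q n d s) + s * (1 - Q n (S d) s))
        by (unfold x; ring).
      split. { apply Rplus_le_le_0_compat; apply Rmult_le_pos; lra. }
      set (F := INR (fact d)) in *.
      assert (hF : 0 < F) by (apply lt_0_INR, lt_O_fact).
      replace (INR (fact (S d))) with (INR (S d) * F) in * by (unfold F; rewrite <- mult_INR; reflexivity).
      assert (hS : 0 < INR (S d)) by (apply lt_0_INR; lia).
      replace (INR (S n)) with (a + 1) by (unfold a; rewrite S_INR; ring).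
      rewrite !Rpow_mult_distr in *.
      pose proof (bern a d ha) as Hb.
      assert (0 <= x ^ d) by (apply pow_le; auto).
      assert (0 <= a ^ d) by (apply pow_le; auto).
      assert (0 <= a ^ S d) by (apply pow_le; auto).
      assert (E1 : x * (1 - Q n d s) <= x * (a ^ d * x ^ d / F)) by (apply Rmult_le_compat_l; auto).
      assert (E2 : s * (1 - Q n (S d) s) <= 1 * (a ^ S d * x ^ S d / (INR (S d) * F))).
      { apply Rmult_le_compat; try lra. }
      assert (E3 : x * (a ^ d * x ^ d / F) + 1 * (a ^ S d * x ^ S d / (INR (S d) * F))
                   = (a ^ S d + INR (S d) * a ^ d) * x ^ S d / (INR (S d) * F)).
      { change (x ^ S d) with (x * x ^ d). field. lra. }
      assert (E4 : (a ^ S d + INR (S d) * a ^ d) * x ^ S d / (INR (S d) * F)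
                   <= (a + 1) ^ S d * x ^ S d / (INR (S d) * F)).
      { unfold Rdiv. apply Rmult_le_compat_r.
        apply Rlt_le, Rinv_0_lt_compat, Rmult_lt_0_compat; auto.
        apply Rmult_le_compat_r; auto. apply pow_le; auto. }
      lra.
Qed.

Lemma exp_pow_nat a j : exp a ^ j = exp (INR j * a).
Proof.
  induction j.
  - simpl. rewrite Rmult_0_l, exp_0. reflexivity.
  - simpl pow. rewrite IHj, S_INR, <- exp_plus. f_equal. ring.
Qed.

Lemma point_err n d j k s rho : 0 <= s <= 1 -> 0 <= rho -> INR n <= rho * INR j ->
  0 <= s ^ (j + k) * (1 - Q n d s) <= rho ^ d.
Proof.
  intros hs hr hn. destruct (Qbound n d s hs) as [B1 B2].
  assert (h1 : 0 <= s ^ (j + k)) by (apply pow_le; lra).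
  split. { apply Rmult_le_pos; auto. }
  set (x := 1 - s) in *.
  assert (hx : 0 <= x) by (unfold x; lra).
  assert (hsk : s ^ (j + k) <= s ^ j).
  { rewrite pow_add. assert (s ^ k <= 1) by (rewrite <- (pow1 k); apply pow_incr; lra).
    assert (0 <= s ^ j) by (apply pow_le; lra). nra. }
  assert (hsj : s ^ j <= exp (- (INR j * x))).
  { replace (- (INR j * x)) with (INR j * (- x)) by ring. rewrite <- exp_pow_nat.
    apply pow_incr. split; [lra|]. pose proof (exp_ineq1_le (- x)). unfold x in *. lra. }
  assert (hF : 0 < INR (fact d)) by (apply lt_0_INR, lt_O_fact).
  assert (hq : (INR n * x) ^ d / INR (fact d) <= rho ^ d * ((INR j * x) ^ d / INR (fact d))).
  { unfold Rdiv. rewrite <- Rmult_assoc. apply Rmult_le_compat_r. apply Rlt_le, Rinv_0_lt_compat; auto.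
    rewrite <- Rpow_mult_distr. apply pow_incr. split.
    apply Rmult_le_pos; [apply pos_INR|auto]. rewrite <- Rmult_assoc. apply Rmult_le_compat_r; auto. }
  assert (he : (INR j * x) ^ d / INR (fact d) <= exp (INR j * x)).
  { apply exp_ge_pow. apply Rmult_le_pos; [apply pos_INR|auto]. }
  assert (hrd : 0 <= rho ^ d) by (apply pow_le; auto).
  assert (0 <= 1 - Q n d s) by lra.
  apply Rle_trans with (s ^ j * (1 - Q n d s)).
  { apply Rmult_le_compat_r; auto. }
  apply Rle_trans with (exp (- (INR j * x)) * (rho ^ d * exp (INR j * x))).
  { assert (rho ^ d * ((INR j * x) ^ d / INR (fact d)) <= rho ^ d * exp (INR j * x)) by (apply Rmult_le_compat_l; auto).
    apply Rmult_le_compat; [apply pow_le; lra | lra | exact hsj | lra]. }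
  rewrite <- Rmult_assoc, (Rmult_comm (exp _)), Rmult_assoc, <- exp_plus.
  replace (- (INR j * x) + INR j * x) with 0 by ring. rewrite exp_0. lra.
Qed.

Lemma rsum_first r f : rsum (S r) f = f 0%nat + rsum r (fun l => f (S l)).
Proof. induction r; simpl in *. ring. rewrite IHr. ring. Qed.

Lemma rsum_ext r f g : (forall l, (l < r)%nat -> f l = g l) -> rsum r f = rsum r g.
Proof. induction r; intros H; simpl; auto. rewrite IHr, H; auto. Qed.

Lemma rsum_add a b f : rsum (a + b) f = rsum a f + rsum b (fun l => f (a + l)%nat).
Proof. induction b; simpl. rewrite Nat.add_0_r. ring. rewrite Nat.add_succ_r. simpl. rewrite IHb. ring. Qed.

Lemma rsum_block p d G : (0 < d)%nat ->
  rsum (p * d) (fun m => G (m / d)%nat (m mod d)%nat) = rsum p (fun i => rsum d (G i)).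
Proof.
  intros hd. induction p.
  - reflexivity.
  - simpl rsum at 2. rewrite <- IHp.
    replace (S p * d)%nat with (p * d + d)%nat by lia. rewrite rsum_add. f_equal.
    apply rsum_ext. intros l hl. f_equal.
    + rewrite Nat.div_add_l by lia. rewrite Nat.div_small by lia. lia.
    + rewrite Nat.add_comm, Nat.Div0.mod_add. apply Nat.mod_small; lia.
Qed.

Lemma rsum_zero p g : (forall i, (i < p)%nat -> g i = 0) -> rsum p g = 0.
Proof. induction p; intros H; simpl; auto. rewrite IHp, H; auto. ring. Qed.

Lemma rsum_single p g i0 : (i0 < p)%nat -> (forall i, (i < p)%nat -> i <> i0 -> g i = 0) -> rsum p g = g i0.
Proof.
  induction p; intros h H. lia. simpl.
  destruct (Nat.eq_dec i0 p).
  - subst. rewrite rsum_zero. ring. intros; apply H; lia.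
  - assert (h1 : (i0 < p)%nat) by lia. rewrite (IHp h1) by (intros; apply H; lia). rewrite (H p) by lia. ring.
Qed.

Definition contR (g : R -> R) := forall x, continuous g x.

Lemma contR_const c : contR (fun _ => c).
Proof. intros x; apply continuous_const. Qed.
Lemma contR_id : contR (fun s => s).
Proof. intros x; apply continuous_id. Qed.
Lemma contR_mult g h : contR g -> contR h -> contR (fun s => g s * h s).
Proof. intros Hg Hh x. apply (continuous_mult (K:=R_AbsRing) g h); auto. Qed.
Lemma contR_minus g h : contR g -> contR h -> contR (fun s => g s - h s).
Proof. intros Hg Hh x. apply (continuous_minus (V:=R_NormedModule) g h); auto. Qed.
Lemma contR_plus g h : contR g -> contR h -> contR (fun s => g s + h s).
Proof. intros Hg Hh x. apply (continuous_plus (V:=R_NormedModule) g h); auto. Qed.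
Lemma contR_pow g m : contR g -> contR (fun s => g s ^ m).
Proof. intros Hg x. apply cont_pow; auto. Qed.
Lemma contR_rsum d (g : nat -> R -> R) : (forall l, contR (g l)) -> contR (fun s => rsum d (fun l => g l s)).
Proof.
  intros H. induction d. simpl. apply contR_const.
  simpl. apply (contR_plus (fun s => rsum d (fun l => g l s)) (g d)); auto.
Qed.

Definition Lf (c : R) (g : R -> R) := 2 / c * RInt (fun t => g (sin t)) 0 (PI / 2).

Lemma ex_RInt_comp g : contR g -> ex_RInt (fun t => g (sin t)) 0 (PI / 2).
Proof.
  intros Hg. apply (ex_RInt_continuous (V:=R_CompleteNormedModule)). intros z _.
  apply (continuous_comp sin g). apply continuous_sin. apply Hg.
Qed.

Lemma Lf_ext c g h : (forall s, g s = h s) -> Lf c g = Lf c h.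
Proof. intros H. unfold Lf. f_equal. apply RInt_ext. intros; apply H. Qed.

Lemma Lf_minus c g h : contR g -> contR h -> Lf c g - Lf c h = Lf c (fun s => g s - h s).
Proof.
  intros Hg Hh. unfold Lf.
  rewrite (RInt_minus (V:=R_CompleteNormedModule) (fun t => g (sin t)) (fun t => h (sin t))).
  unfold minus, plus, opp; simpl. ring.
  apply ex_RInt_comp; auto. apply ex_RInt_comp; auto.
Qed.

Lemma Lf_sum c d (a : nat -> R) (g : nat -> R -> R) : (forall l, contR (g l)) ->
  rsum d (fun l => a l * Lf c (g l)) = Lf c (fun s => rsum d (fun l => a l * g l s)).
Proof.
  intros H. induction d.
  - unfold Lf. simpl. rewrite (RInt_const (V:=R_CompleteNormedModule)). unfold scal; simpl; unfold mult; simpl. ring.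
  - simpl. rewrite IHd. unfold Lf.
    rewrite (RInt_plus (V:=R_CompleteNormedModule) (fun t => rsum d (fun l => a l * g l (sin t))) (fun t => a d * g d (sin t))).
    rewrite (RInt_scal (V:=R_CompleteNormedModule) (fun t => g d (sin t))).
    unfold plus, scal; simpl; unfold mult; simpl. ring.
    apply ex_RInt_comp; auto.
    apply (ex_RInt_comp (fun s => rsum d (fun l => a l * g l s))).
    apply contR_rsum. intros l; apply contR_mult; auto. apply contR_const.
    apply (ex_RInt_comp (fun s => a d * g d s)). apply contR_mult; auto. apply contR_const.
Qed.

Lemma RInt_le_const (f : R -> R) a b c : a <= b -> ex_RInt f a b ->
  (forall t, a < t < b -> f t <= c) -> RInt f a b <= c * (b - a).
Proof.
  intros hab hf H.
  assert (E : RInt (fun _ => c) a b = c * (b - a)).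
  { rewrite (RInt_const (V:=R_CompleteNormedModule)). unfold scal; simpl; unfold mult; simpl. ring. }
  rewrite <- E. apply RInt_le; auto. apply (ex_RInt_const (V:=R_NormedModule)).
Qed.

Lemma Lf_bounds c g lo hi : 0 < c -> contR g -> (forall s, 0 <= s <= 1 -> lo <= g s <= hi) ->
  lo * (PI / c) <= Lf c g <= hi * (PI / c).
Proof.
  intros hc Hg H. unfold Lf. pose proof PI_RGT_0.
  assert (hs : forall t, 0 < t < PI / 2 -> lo <= g (sin t) <= hi).
  { intros t ht. apply H. split. apply sin_ge_0; lra. pose proof (SIN_bound t); lra. }
  pose proof (RInt_ge_const (fun t => g (sin t)) 0 (PI/2) lo ltac:(lra) (ex_RInt_comp g Hg) ltac:(intros; apply hs; auto)).
  pose proof (RInt_le_const (fun t => g (sin t)) 0 (PI/2) hi ltac:(lra) (ex_RInt_comp g Hg) ltac:(intros; apply hs; auto)).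
  assert (0 < 2 / c) by (apply Rdiv_lt_0_compat; lra).
  replace (lo * (PI / c)) with (2 / c * (lo * (PI / 2 - 0))) by (field; lra).
  replace (hi * (PI / c)) with (2 / c * (hi * (PI / 2 - 0))) by (field; lra).
  split; apply Rmult_le_compat_l; lra.
Qed.

Definition memP (N : nat) (beta : R) (p i j : nat) :=
  (0 < j)%nat /\ INR j <= INR N * beta ^ i /\ (i = pred p \/ INR N * beta ^ (S i) < INR j).

Lemma mem_dec N beta p i j : {memP N beta p i j} + {~ memP N beta p i j}.
Proof.
  unfold memP.
  destruct (lt_dec 0 j) as [h1|h1]; [|right; tauto].
  destruct (Rle_dec (INR j) (INR N * beta ^ i)) as [h2|h2]; [|right; tauto].
  destruct (Nat.eq_dec i (pred p)) as [h3|h3]; [left; tauto|].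
  destruct (Rlt_dec (INR N * beta ^ (S i)) (INR j)) as [h4|h4]; [left; tauto|right; tauto].
Qed.

Lemma pow_decr beta a b : 0 <= beta <= 1 -> (a <= b)%nat -> beta ^ b <= beta ^ a.
Proof.
  intros hb hab. replace b with (a + (b - a))%nat by lia. rewrite pow_add.
  assert (0 <= beta ^ a) by (apply pow_le; lra).
  assert (beta ^ (b - a) <= 1) by (rewrite <- (pow1 (b - a)); apply pow_incr; lra).
  assert (0 <= beta ^ (b - a)) by (apply pow_le; lra). nra.
Qed.

Lemma mem_exists N beta p j : 0 < beta <= 1 -> (0 < p)%nat -> (1 <= j <= N)%nat ->
  exists i, (i < p)%nat /\ memP N beta p i j.
Proof.
  intros hb hp hj.
  assert (G : forall k i, (i + k = pred p)%nat -> INR j <= INR N * beta ^ i ->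
            exists i', (i <= i' <= pred p)%nat /\ memP N beta p i' j).
  { induction k; intros i hik hi.
    - exists i. split; [lia|]. unfold memP. repeat split; auto; [lia|]. left; lia.
    - destruct (Rlt_dec (INR N * beta ^ (S i)) (INR j)) as [h|h].
      + exists i. split; [lia|]. unfold memP. repeat split; auto; lia.
      + destruct (IHk (S i) ltac:(lia) ltac:(lra)) as [i' [h1 h2]]. exists i'. split; auto; lia. }
  destruct (G (pred p) 0%nat ltac:(lia)) as [i [h1 h2]].
  { simpl. rewrite Rmult_1_r. apply le_INR; lia. }
  exists i. split; auto; lia.
Qed.

Lemma mem_unique N beta p i i' j : 0 < beta <= 1 -> (i < p)%nat -> (i' < p)%nat ->
  memP N beta p i j -> memP N beta p i' j -> i = i'.
Proof.
  intros hb hi hi' [a1 [a2 a3]] [b1 [b2 b3]].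
  assert (HN : 0 <= INR N) by apply pos_INR.
  destruct (Nat.lt_total i i') as [h|[h|h]]; auto.
  - destruct a3 as [a3|a3]; [lia|].
    pose proof (pow_decr beta (S i) i' ltac:(lra) ltac:(lia)).
    assert (INR N * beta ^ i' <= INR N * beta ^ S i) by (apply Rmult_le_compat_l; auto). lra.
  - destruct b3 as [b3|b3]; [lia|].
    pose proof (pow_decr beta (S i') i ltac:(lra) ltac:(lia)).
    assert (INR N * beta ^ i <= INR N * beta ^ S i') by (apply Rmult_le_compat_l; auto). lra.
Qed.

Definition Bk (N : nat) (beta : R) (i : nat) := Z.to_nat (Zfloor (INR N * beta ^ i)).

Lemma mem_block N beta p i j : 0 < beta < 1 -> (0 < p)%nat -> INR N * beta ^ p <= 1 ->
  memP N beta p i j -> (j <= Bk N beta i)%nat /\ INR (Bk N beta i - j) <= (1 - beta) / beta * INR j.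
Proof.
  intros hb hp hNp [h1 [h2 h3]].
  set (y := INR N * beta ^ i) in *.
  assert (hj1 : 1 <= INR j) by (apply (le_INR 1); lia).
  assert (hz : (Z.of_nat j <= Zfloor y)%Z) by (apply Zfloor_lub; rewrite <- INR_IZR_INZ; auto).
  assert (hjB : (j <= Bk N beta i)%nat) by (unfold Bk; fold y; lia).
  split; auto.
  assert (hB : INR (Bk N beta i) <= y).
  { unfold Bk; fold y. rewrite INR_IZR_INZ, Z2Nat.id by lia. apply Zfloor_bound. }
  assert (hby : beta * y <= INR j).
  { destruct h3 as [h3|h3].
    - subst i. unfold y. replace (beta * (INR N * beta ^ pred p)) with (INR N * beta ^ p).
      lra. replace p with (S (pred p)) at 1 by lia. simpl. ring.
    - unfold y. simpl in h3. lra. }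
  rewrite minus_INR by auto.
  assert (y <= INR j / beta) by (apply (Rmult_le_reg_l beta); [lra|]; field_simplify; lra).
  replace ((1 - beta) / beta * INR j) with (INR j / beta - INR j) by (field; lra). lra.
Qed.

Lemma ceil_pos x : 0 < x -> (0 < Zceil x)%Z /\ x <= INR (Z.to_nat (Zceil x)).
Proof.
  intros hx. pose proof (Zceil_bound x) as [h1 h2].
  assert (hz : (0 < Zceil x)%Z) by (apply lt_IZR; lra).
  split; auto. rewrite INR_IZR_INZ, Z2Nat.id by lia. auto.
Qed.

Lemma pow_exp b n : 0 < b -> b ^ n = exp (INR n * ln b).
Proof. intros hb. rewrite <- Rpower_pow by auto. reflexivity. Qed.

Lemma fv_eq Gamma (HGamma : forall x, 0 < x -> is_Gamma x (Gamma x)) m :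
  fv Gamma m = Lf (c0 Gamma) (fun s => s ^ m).
Proof.
  pose proof (c0sq Gamma HGamma) as hsq.
  assert (hc : 0 < c0 Gamma) by (apply (Gpos Gamma HGamma); lra).
  pose proof PI_RGT_0.
  unfold Lf. fold (W m).
  destruct (Nat.Even_or_Odd m) as [[n hn]|[n hn]]; subst m.
  - rewrite (proj1 (fvW Gamma HGamma n)). rewrite <- hsq. field. lra.
  - replace (2 * n + 1)%nat with (S (2 * n)) by lia.
    rewrite (proj2 (fvW Gamma HGamma n)). reflexivity.
Qed.

Lemma rsum_scal c d f : c * rsum d f = rsum d (fun l => c * f l).
Proof. induction d; simpl. ring. rewrite <- IHd. ring. Qed.

Lemma expand_id n j B d k s : (B = n + j)%nat ->
  rsum d (fun l => binR n l * ((1 - s) ^ l * s ^ (B - l + k))) = s ^ (j + k) * Q n d s.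
Proof.
  intros hB. unfold Q. rewrite rsum_scal. apply rsum_ext. intros l hl.
  destruct (le_lt_dec l n) as [h|h].
  - replace (B - l + k)%nat with ((n - l) + (j + k))%nat by lia. rewrite pow_add. ring.
  - rewrite binR_big by lia. ring.
Qed.

Lemma contR_poly l q : contR (fun s => (1 - s) ^ l * s ^ q).
Proof.
  apply contR_mult. apply (contR_pow (fun s => 1 - s)). apply contR_minus. apply contR_const. apply contR_id.
  apply (contR_pow (fun s => s)). apply contR_id.
Qed.

Lemma contR_Q n d : contR (Q n d).
Proof.
  unfold Q. apply (contR_rsum d (fun l s => binR n l * (1 - s) ^ l * s ^ (n - l))).
  intros l. apply contR_mult. apply contR_mult. apply contR_const.
  apply (contR_pow (fun s => 1 - s)). apply contR_minus. apply contR_const. apply contR_id.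
  apply (contR_pow (fun s => s)). apply contR_id.
Qed.

Theorem mainTheorem6
  (Gamma : R -> R) (HGamma : forall x, 0 < x -> is_Gamma x (Gamma x))
  (N : nat) (eps beta : R) :
  (1 < N)%nat -> 0 < eps -> eps < exp 1 -> / 2 < beta -> beta < 1 ->
  let K : Z := (Zceil (ln (INR N) / ln (/ beta)) *
                Zceil (ln (exp 1 / eps) / ln (beta / (1 - beta))))%Z in
  let Lambda : R -> R := fun z => Gamma (z + / 2) / Gamma (z + 1) in
  let H : nat -> nat -> R := fun j k => Lambda ((INR j + INR k) / 2) in
  exists Ht : nat -> nat -> R,
    rank_at_most (N + 1) Ht (Z.to_nat (K + 1)) /\
    forall j k, (j <= N)%nat -> (k <= N)%nat -> Rabs (H j k - Ht j k) <= eps.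
Proof.
  intros hN he1 he2 hb1 hb2 K Lambda H.
  assert (hb : 0 < beta) by lra.
  assert (hNR : 1 < INR N) by (apply (lt_INR 1); lia).
  assert (hlb : 0 < ln (/ beta)).
  { rewrite <- ln_1. apply ln_increasing; [lra|]. rewrite <- Rinv_1. apply Rinv_lt_contravar; lra. }
  assert (hlN : 0 < ln (INR N)) by (rewrite <- ln_1; apply ln_increasing; lra).
  assert (hlr : 0 < ln (beta / (1 - beta))).
  { rewrite <- ln_1. apply ln_increasing; [lra|]. apply (Rmult_lt_reg_r (1 - beta)); [lra|].
    field_simplify; lra. }
  assert (hee : 0 < exp 1) by apply exp_pos.
  assert (hle : 0 < ln (exp 1 / eps)).
  { rewrite <- ln_1. apply ln_increasing; [lra|]. apply (Rmult_lt_reg_r eps); [lra|].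
    field_simplify; lra. }
  destruct (ceil_pos (ln (INR N) / ln (/ beta))) as [hpZ hpR].
  { apply Rdiv_lt_0_compat; auto. }
  destruct (ceil_pos (ln (exp 1 / eps) / ln (beta / (1 - beta)))) as [hdZ hdR].
  { apply Rdiv_lt_0_compat; auto. }
  set (p := Z.to_nat (Zceil (ln (INR N) / ln (/ beta)))) in *.
  set (d := Z.to_nat (Zceil (ln (exp 1 / eps) / ln (beta / (1 - beta))))) in *.
  assert (hp : (0 < p)%nat) by (unfold p; lia).
  assert (hd : (0 < d)%nat) by (unfold d; lia).
  assert (hK : Z.to_nat (K + 1) = S (p * d)).
  { unfold K, p, d. rewrite Z2Nat.inj_add, Z2Nat.inj_mul by lia. simpl. lia. }
  assert (hNp : INR N * beta ^ p <= 1).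
  { rewrite pow_exp by auto.
    assert (E : ln beta = - ln (/ beta)) by (rewrite ln_Rinv by lra; ring).
    rewrite E.
    assert (ln (INR N) <= INR p * ln (/ beta)).
    { apply (Rmult_le_compat_r (ln (/ beta))) in hpR; [|lra].
      replace (ln (INR N) / ln (/ beta) * ln (/ beta)) with (ln (INR N)) in hpR by (field; lra). exact hpR. }
    assert (exp (INR p * - ln (/ beta)) <= exp (- ln (INR N))) by (apply exp_mono; lra).
    rewrite exp_Ropp, exp_ln in H1 by lra.
    apply (Rmult_le_compat_l (INR N)) in H1; [|lra].
    rewrite Rinv_r in H1 by lra. exact H1. }
  set (rho := (1 - beta) / beta).
  assert (hrho : 0 < rho) by (apply Rdiv_lt_0_compat; lra).
  assert (hrd : rho ^ d <= eps / exp 1).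
  { rewrite pow_exp by auto.
    assert (E : ln rho = - ln (beta / (1 - beta))).
    { unfold rho. replace ((1 - beta) / beta) with (/ (beta / (1 - beta))) by (field; lra).
      rewrite ln_Rinv. ring. apply Rdiv_lt_0_compat; lra. }
    rewrite E.
    assert (ln (exp 1 / eps) <= INR d * ln (beta / (1 - beta))).
    { apply (Rmult_le_compat_r (ln (beta / (1 - beta)))) in hdR; [|lra].
      replace (ln (exp 1 / eps) / ln (beta / (1 - beta)) * ln (beta / (1 - beta))) with (ln (exp 1 / eps)) in hdR by (field; lra). exact hdR. }
    assert (exp (INR d * - ln (beta / (1 - beta))) <= exp (- ln (exp 1 / eps))) by (apply exp_mono; lra).
    rewrite exp_Ropp, exp_ln in H1 by (apply Rdiv_lt_0_compat; lra).
    replace (eps / exp 1) with (/ (exp 1 / eps)) by (field; lra). exact H1. }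
  set (c := c0 Gamma).
  assert (hc : 0 < c) by (apply (Gpos Gamma HGamma); lra).
  assert (hcsq : c ^ 2 = PI) by apply (c0sq Gamma HGamma).
  assert (hce : c <= exp 1).
  { pose proof PI_4. pose proof (exp_ineq1_le 1). nra. }
  assert (hPc : PI / c = c) by (rewrite <- hcsq; field; lra).
  assert (Hm : forall j k, H j k = Lf c (fun s => s ^ (j + k))).
  { intros j k. unfold c. rewrite <- fv_eq by auto. unfold H, Lambda, fv, Lam. rewrite plus_INR. reflexivity. }
  set (U := fun i l j => if mem_dec N beta p i j then binR (Bk N beta i - j) l else 0).
  set (V := fun i l k => Lf c (fun s => (1 - s) ^ l * s ^ (Bk N beta i - l + k))).
  set (Uf := fun l j => match l with O => if Nat.eq_dec j 0 then 1 else 0 | S m => U (m / d)%nat (m mod d)%nat j end).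
  set (Vf := fun l k => match l with O => H 0%nat k | S m => V (m / d)%nat (m mod d)%nat k end).
  exists (fun j k => rsum (S (p * d)) (fun l => Uf l j * Vf l k)).
  split.
  { rewrite hK. exists Uf, Vf. intros; reflexivity. }
  intros j k hj hk.
  assert (E : rsum (S (p * d)) (fun l => Uf l j * Vf l k)
              = (if Nat.eq_dec j 0 then 1 else 0) * H 0%nat k + rsum p (fun i => rsum d (fun l => U i l j * V i l k))).
  { rewrite rsum_first. f_equal.
    rewrite <- (rsum_block p d (fun i l => U i l j * V i l k)) by auto.
    apply rsum_ext. intros; reflexivity. }
  rewrite E. clear E.
  destruct (Nat.eq_dec j 0) as [hj0|hj0].
  - subst j. rewrite rsum_zero.
    + replace (H 0%nat k - (1 * H 0%nat k + 0)) with 0 by ring. rewrite Rabs_R0. lra.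
    + intros i hi. apply rsum_zero. intros l hl. unfold U.
      destruct (mem_dec N beta p i 0) as [[h _]|h]; [lia|ring].
  - destruct (mem_exists N beta p j ltac:(lra) hp ltac:(lia)) as [i0 [hi0 hm0]].
    rewrite (rsum_single p _ i0 hi0).
    2:{ intros i hi hne. apply rsum_zero. intros l hl. unfold U.
        destruct (mem_dec N beta p i j) as [h|h]; [|ring].
        exfalso. apply hne. apply (mem_unique N beta p i i0 j); auto; lra. }
    destruct (mem_block N beta p i0 j ltac:(lra) hp hNp hm0) as [hjB hnB].
    set (B := Bk N beta i0) in *. set (n := (B - j)%nat) in *.
    assert (E2 : rsum d (fun l => U i0 l j * V i0 l k) = rsum d (fun l => binR n l * V i0 l k)).
    { apply rsum_ext. intros l hl. unfold U. destruct (mem_dec N beta p i0 j) as [h|h]; [reflexivity|contradiction]. }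
    rewrite E2. clear E2.
    unfold V; cbv beta; fold B. rewrite (Lf_sum c d (fun l => binR n l) (fun l s => (1 - s) ^ l * s ^ (B - l + k))).
    2: intros; apply contR_poly.
    rewrite (Lf_ext c _ (fun s => s ^ (j + k) * Q n d s)).
    2: intros s; apply expand_id; unfold n; lia.
    destruct (Nat.eq_dec j 0) as [h|h]; [contradiction|].
    replace (0 * H 0%nat k + Lf c (fun s => s ^ (j + k) * Q n d s)) with (Lf c (fun s => s ^ (j + k) * Q n d s)) by ring.
    rewrite Hm, Lf_minus.
    2: apply (contR_pow (fun s => s)); apply contR_id.
    2: apply contR_mult; [apply (contR_pow (fun s => s)); apply contR_id| apply contR_Q].
    destruct (Lf_bounds c (fun s => s ^ (j + k) - s ^ (j + k) * Q n d s) 0 (rho ^ d) hc) as [L1 L2].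
    { apply contR_minus. apply (contR_pow (fun s => s)); apply contR_id.
      apply contR_mult; [apply (contR_pow (fun s => s)); apply contR_id| apply contR_Q]. }
    { intros s hs. replace (s ^ (j + k) - s ^ (j + k) * Q n d s) with (s ^ (j + k) * (1 - Q n d s)) by ring.
      apply point_err; auto; lra. }
    rewrite hPc in L1, L2.
    rewrite Rabs_right by lra.
    apply Rle_trans with (rho ^ d * c); auto.
    apply Rle_trans with (eps / exp 1 * exp 1).
    + apply Rmult_le_compat; auto. apply pow_le; lra. lra.
    + right. field. lra.
Qed.
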